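(* Let $q\in\mathbb{C}\setminus\{0\}$, $n\in\mathbb{Z}_{>0}$, and let $\alpha,\beta,f\in\mathbb{C}[x^{-1}][[x]]$ with $\alpha,\beta$ nonzero. Suppose $\alpha\,\sigma_qf+f=\beta$ and that $\beta_j\neq0$ for every integer $0<j\le n$, where $\beta_j=\sum_{k=0}^{j-1}(-\alpha\sigma_q)^k\beta$. Then $$L_n^{\alpha,\beta}(f^n)=(-1)^{n(n-1)/2},$$ where $$L_n^{\alpha,\beta}=\frac{1}{\beta_n}\left(\alpha\sigma_q+1\right)\frac{1}{\beta_{n-1}}\left(\alpha^2\sigma_q-1\right)\cdots\frac{1}{\beta_1}\left(\alpha^n\sigma_q-(-1)^n\right),$$ i.e. the composition, from left to right over $i=1,\dots,n$, of the factors $\frac{1}{\beta_{n+1-i}}\left(\alpha^{i}\sigma_q-(-1)^{i}\right)$.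
   Context: $\mathbb{C}[x^{-1}][[x]]$ is the field of formal Laurent series; $\sigma_qf(x)=f(qx)$; field elements act as multiplication operators and products of operators denote composition. *)

(* Defs.v *)
From HB Require Import structures.
From mathcomp Require Import all_boot all_order all_algebra.
From mathcomp Require Import complex Rstruct.
From Stdlib Require Import ClassicalEpsilon.
Set Implicit Arguments. Unset Strict Implicit. Unset Printing Implicit Defensive.
Import Order.TTheory GRing.Theory Num.Theory.
Local Open Scope ring_scope.

Notation C := (complex Rdefinitions.R).

(* A formal Laurent series sum_k a_k x^k is represented by its coefficient
   function a : int -> C; it is a Laurent series when its support is bounded below. *)
Definition series := int -> C.
Definition laurent (a : series) : Prop := exists N : int, forall k : int, k < N -> a k = 0.

(* a lower bound of the support (chosen classically; irrelevant for the values below) *)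
Definition lowb (a : series) : int :=
  epsilon (inhabits 0%R) (fun N : int => forall k : int, k < N -> a k = 0).

Definition szero : series := fun _ => 0.
Definition sconst (c : C) : series := fun k => if k == 0 then c else 0.
Definition sone : series := sconst 1.
Definition sadd (a b : series) : series := fun k => a k + b k.
Definition sopp (a : series) : series := fun k => - a k.
Definition ssub (a b : series) : series := fun k => a k - b k.
Definition sscale (c : C) (a : series) : series := fun k => c * a k.
Definition smul (a b : series) : series := fun k =>
  if (lowb a + lowb b <= k)%R then
    (\sum_(j < (absz (k - lowb a - lowb b)%R).+1) a (lowb a + j%:Z)%R * b (k - lowb a - j%:Z)%R)%R
  else 0.
Definition sexp (a : series) (n : nat) : series := iter n (smul a) sone.
Definition sinv (a : series) : series :=
  epsilon (inhabits szero) (fun b => laurent b /\ smul b a = sone).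

(* sigma_q f (x) = f (q x) : coefficient of x^k is multiplied by q^k *)
Definition sigma (q : C) (a : series) : series := fun k => q ^ k * a k.

Definition betaj (q : C) (alpha beta : series) (j : nat) : series :=
  fun m => \sum_(k < j) iter k (fun h => sopp (smul alpha (sigma q h))) beta m.

Definition Lfactor (q : C) (alpha beta : series) (n i : nat) (h : series) : series :=
  smul (sinv (betaj q alpha beta (n + 1 - i)))
       (ssub (smul (sexp alpha i) (sigma q h)) (sscale ((-1) ^+ i) h)).

Definition Lop (q : C) (alpha beta : series) (n : nat) (h : series) : series :=
  foldr (fun i acc => Lfactor q alpha beta n i acc) h (iota 1 n).

(* Main.v *)
Require Import Defs.
From HB Require Import structures.
From mathcomp Require Import all_boot all_order all_algebra complex Rstruct.
From mathcomp Require Import boolp.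
From mathcomp Require Import zify ring.
From Stdlib Require Import ClassicalEpsilon ProofIrrelevance Classical.
Set Implicit Arguments. Unset Strict Implicit. Unset Printing Implicit Defensive.
Import Order.TTheory GRing.Theory Num.Theory.
Local Open Scope ring_scope.

Definition pconv (p r : nat -> C) (m : nat) : C := \sum_(j < m.+1) p j * r (m - j)%N.

Lemma pconv_poly p r m K : (m < K)%N ->
  pconv p r m = (\poly_(i < K) p i * \poly_(i < K) r i)`_m.
Proof.
move=> mK; rewrite coefM /pconv; apply: eq_bigr => j _.
rewrite !coef_poly; have jm := ltn_ord j; rewrite ltnS in jm.
rewrite (leq_ltn_trans jm mK) (leq_ltn_trans (leq_subr j m) mK) //.
Qed.

Lemma pconvC p r m : pconv p r m = pconv r p m.
Proof. by rewrite !(@pconv_poly _ _ m m.+1) // mulrC. Qed.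

Lemma pconvA p r s m : pconv (pconv p r) s m = pconv p (pconv r s) m.
Proof.
set P := \poly_(i < m.+1) p i; set R := \poly_(i < m.+1) r i; set S := \poly_(i < m.+1) s i.
transitivity ((P * R * S)`_m); last first.
  rewrite -mulrA coefM /pconv; apply: eq_bigr => j _.
  rewrite coef_poly ltn_ord -(@pconv_poly _ _ _ m.+1) //; exact: leq_ltn_trans (leq_subr _ _) _.
rewrite coefM /pconv; apply: eq_bigr => j _.
rewrite [S`__]coef_poly ltnS leq_subr -(@pconv_poly _ _ _ m.+1) //.
Qed.

Lemma pconvDl p p' r m : pconv (fun i => p i + p' i) r m = pconv p r m + pconv p' r m.
Proof. by rewrite /pconv -big_split; apply: eq_bigr => j _; rewrite mulrDl. Qed.

Definition vb (a : series) (N : int) := forall k : int, k < N -> a k = 0.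
Definition sh (a : series) (N : int) : nat -> C := fun i => a (N + i%:Z).
Definition S (a b : series) (N M : int) (k : int) : C :=
  if N + M <= k then pconv (sh a N) (sh b M) (absz (k - N - M)%R) else 0.

Lemma smulE a b : smul a b = S a b (lowb a) (lowb b).
Proof.
apply/funext => k; rewrite /smul /S; case: ifP => // H.
apply: eq_bigr => j _; rewrite /sh; congr (_ * b _).
have jm := ltn_ord j; rewrite ltnS in jm.
rewrite -subzn //; rewrite gez0_abs; [lia|lia].
Qed.

Lemma S_step a b N M k : a (N - 1) = 0 -> S a b (N - 1) M k = S a b N M k.
Proof.
move=> a0; rewrite /S.
case: (boolP (N + M <= k)) => H.
  have -> : N - 1 + M <= k by lia.
  have -> : absz (k - (N - 1) - M)%R = (absz (k - N - M)%R).+1 by lia.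
  rewrite /pconv big_ord_recl /sh addr0 a0 mul0r add0r.
  apply: eq_bigr => j _; rewrite subSS; congr (a _ * _).
  rewrite lift0; move: (nat_of_ord j) => jj; lia.
case: ifP => // H2.
have -> : absz (k - (N - 1) - M)%R = 0%N by lia.
by rewrite /pconv big_ord1 /sh addr0 a0 mul0r.
Qed.

Lemma S_C a b N M k : S a b N M k = S b a M N k.
Proof.
rewrite /S addrC pconvC.
have -> : k - N - M = k - M - N by ring.
by [].
Qed.

Lemma S_down a b N M k (d : nat) : vb a N -> S a b (N - d%:Z) M k = S a b N M k.
Proof.
move=> va; elim: d => [|d IH]; first by rewrite subr0.
rewrite -IH.
have -> : N - d.+1%:Z = N - d%:Z - 1 by lia.
apply: S_step; apply: va; lia.
Qed.

Lemma S_indepl a b N N' M k : vb a N -> vb a N' -> S a b N M k = S a b N' M k.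
Proof.
move=> va va'.
have [le|lt] := lerP N N'.
  have -> : N = N' - (absz (N' - N))%R%:Z by lia.
  by rewrite S_down.
have -> : N' = N - (absz (N - N')%R)%:Z by lia.
by rewrite S_down.
Qed.

Lemma S_indep a b N N' M M' k : vb a N -> vb a N' -> vb b M -> vb b M' ->
  S a b N M k = S a b N' M' k.
Proof.
move=> va va' vb1 vb2.
rewrite (S_indepl _ _ _ va va') S_C (S_indepl _ _ _ vb1 vb2) S_C //.
Qed.

Lemma lowbP a : laurent a -> vb a (lowb a).
Proof.
move=> la; rewrite /lowb; exact: (epsilon_spec (inhabits 0) _ la).
Qed.

Lemma smulS a b N M : laurent a -> laurent b -> vb a N -> vb b M ->
  smul a b = S a b N M.
Proof.
move=> la lb va vb'; rewrite smulE; apply/funext => k.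
apply: S_indep => //; exact: lowbP.
Qed.

Lemma S_vb a b N M : vb (S a b N M) (N + M).
Proof. move=> k kl; rewrite /S; case: ifP => //; lia. Qed.

Lemma sh_S a b N M : sh (S a b N M) (N + M) = pconv (sh a N) (sh b M).
Proof.
apply/funext => i; rewrite /sh /S.
have -> : N + M <= N + M + i%:Z by lia.
congr pconv; lia.
Qed.

Lemma S_sh a b N M k : N + M <= k -> S a b N M k = pconv (sh a N) (sh b M) (absz (k - N - M)%R).
Proof. by rewrite /S => ->. Qed.

Lemma vb_le a N M : vb a N -> M <= N -> vb a M.
Proof. move=> v le k kM; apply: v; exact: lt_le_trans kM le. Qed.

Lemma laurent_vb a : laurent a -> exists N, vb a N.
Proof. by []. Qed.

Lemma sconst_vb c : vb (sconst c) 0.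
Proof. by move=> k k0; rewrite /sconst; case: eqP => // e; move: k0; rewrite e ltxx. Qed.

Lemma laurent_sconst c : laurent (sconst c).
Proof. by exists 0; apply: sconst_vb. Qed.

Lemma laurent_szero : laurent szero.
Proof. by exists 0. Qed.

Lemma laurent_sadd a b : laurent a -> laurent b -> laurent (sadd a b).
Proof.
move=> [N va] [M vb']; exists (- ((absz N)%:Z + (absz M)%:Z)) => k kl; rewrite /sadd.
rewrite va ?vb' ?addr0 //; lia.
Qed.

Lemma laurent_sopp a : laurent a -> laurent (sopp a).
Proof. by move=> [N va]; exists N => k kl; rewrite /sopp va ?oppr0. Qed.

Lemma laurent_smul a b : laurent (smul a b).
Proof. by exists (lowb a + lowb b); rewrite smulE; apply: S_vb. Qed.

Record ls := LS { lsv : series; lsP : laurent lsv }.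
HB.instance Definition _ := gen_eqMixin ls.
HB.instance Definition _ := gen_choiceMixin ls.

Lemma ls_inj (a b : ls) : lsv a = lsv b -> a = b.
Proof.
case: a => a pa; case: b => b pb /= e; subst b.
by rewrite (proof_irrelevance _ pa pb).
Qed.

Definition lsof (a : series) : ls :=
  match excluded_middle_informative (laurent a) with
  | left p => LS p
  | right _ => LS laurent_szero
  end.

Lemma lsofK a : laurent a -> lsv (lsof a) = a.
Proof. by rewrite /lsof; case: excluded_middle_informative. Qed.

Definition ls_zero := LS laurent_szero.
Definition ls_opp (a : ls) := LS (laurent_sopp (lsP a)).
Definition ls_add (a b : ls) := LS (laurent_sadd (lsP a) (lsP b)).

Lemma ls_addA : associative ls_add.
Proof. by move=> a b c; apply: ls_inj; apply/funext => k; rewrite /= /sadd addrA. Qed.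
Lemma ls_addC : commutative ls_add.
Proof. by move=> a b; apply: ls_inj; apply/funext => k; rewrite /= /sadd addrC. Qed.
Lemma ls_add0 : left_id ls_zero ls_add.
Proof. by move=> a; apply: ls_inj; apply/funext => k; rewrite /= /sadd /szero add0r. Qed.
Lemma ls_addN : left_inverse ls_zero ls_opp ls_add.
Proof. by move=> a; apply: ls_inj; apply/funext => k; rewrite /= /sadd /sopp /szero addNr. Qed.

HB.instance Definition _ := GRing.isZmodule.Build ls ls_addA ls_addC ls_add0 ls_addN.

Definition ls_one := LS (laurent_sconst 1).
Definition ls_mul (a b : ls) := LS (laurent_smul (lsv a) (lsv b)).

Lemma smulV a b N M : vb a N -> vb b M -> smul a b = S a b N M.
Proof. move=> va vb'; apply: smulS => //; [by exists N | by exists M]. Qed.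

Lemma smulA a b c : laurent a -> laurent b -> laurent c ->
  smul (smul a b) c = smul a (smul b c).
Proof.
move=> [N va] [M vb'] [P vc].
rewrite (smulV va vb') (smulV vb' vc).
rewrite (smulV (@S_vb a b N M) vc) (smulV va (@S_vb b c M P)).
apply/funext => k; rewrite /S !sh_S pconvA addrA.
case: ifP => // _; congr pconv; congr absz; ring.
Qed.

Lemma smulC a b : smul a b = smul b a.
Proof. by apply/funext => k; rewrite !smulE S_C. Qed.

Lemma pconv1 r m : pconv (sh sone 0) r m = r m.
Proof.
rewrite /pconv big_ord_recl big1 ?addr0.
  by rewrite /sh /sone /sconst add0r eqxx mul1r subn0.
move=> j _; rewrite /sh /sone /sconst add0r.
by rewrite (_ : (lift ord0 j)%:Z == 0 = false) ?mul0r // lift0.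
Qed.

Lemma smul1 a : laurent a -> smul sone a = a.
Proof.
move=> [N va]; rewrite (smulV (sconst_vb 1) va); apply/funext => k.
rewrite /S add0r pconv1 /sh; case: ifP => H; last by rewrite va //; lia.
congr a; lia.
Qed.

Lemma smulDl a b c : laurent a -> laurent b -> laurent c ->
  smul (sadd a b) c = sadd (smul a c) (smul b c).
Proof.
move=> [N va] [M vb'] [P vc].
set L := - ((absz N)%:Z + (absz M)%:Z).
have vaL : vb a L by apply: (vb_le va); lia.
have vbL : vb b L by apply: (vb_le vb'); lia.
have vabL : vb (sadd a b) L by move=> k kl; rewrite /sadd vaL ?vbL ?addr0.
rewrite (smulV vabL vc) (smulV vaL vc) (smulV vbL vc); apply/funext => k.
rewrite /S /sadd; case: ifP => _; last by rewrite addr0.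
by rewrite -pconvDl.
Qed.

Lemma ls_mulA : associative ls_mul.
Proof. by move=> a b c; apply: ls_inj; rewrite /= smulA //; apply: lsP. Qed.
Lemma ls_mulC : commutative ls_mul.
Proof. by move=> a b; apply: ls_inj; rewrite /= smulC. Qed.
Lemma ls_mul1 : left_id ls_one ls_mul.
Proof. by move=> a; apply: ls_inj; rewrite /= smul1 //; apply: lsP. Qed.
Lemma ls_mulDl : left_distributive ls_mul ls_add.
Proof. by move=> a b c; apply: ls_inj; rewrite /= smulDl //; apply: lsP. Qed.
Lemma ls_one0 : ls_one != ls_zero.
Proof.
apply/eqP => /(congr1 lsv) /= /(congr1 (fun f => f 0)).
by rewrite /sconst /szero eqxx => /eqP; rewrite oner_eq0.
Qed.

HB.instance Definition _ := GRing.Zmodule_isComNzRing.Build ls ls_mulA ls_mulC ls_mul1 ls_mulDl ls_one0.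

Lemma lsv_add (a b : ls) : lsv (a + b) = sadd (lsv a) (lsv b). Proof. by []. Qed.
Lemma lsv_opp (a : ls) : lsv (- a) = sopp (lsv a). Proof. by []. Qed.
Lemma lsv_mul (a b : ls) : lsv (a * b) = smul (lsv a) (lsv b). Proof. by []. Qed.
Lemma lsv_one : lsv (1 : ls) = sone. Proof. by []. Qed.
Lemma lsv_zero : lsv (0 : ls) = szero. Proof. by []. Qed.

Lemma pconvc c r m : pconv (sh (sconst c) 0) r m = c * r m.
Proof.
rewrite /pconv big_ord_recl big1 ?addr0.
  by rewrite /sh /sconst add0r eqxx subn0.
move=> j _; rewrite /sh /sconst add0r.
by rewrite (_ : (lift ord0 j)%:Z == 0 = false) ?mul0r // lift0.
Qed.

Lemma smulc c a : laurent a -> smul (sconst c) a = sscale c a.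
Proof.
move=> [N va]; rewrite (smulV (sconst_vb c) va); apply/funext => k.
rewrite /S add0r pconvc /sh /sscale; case: ifP => H; last by rewrite va ?mulr0 //; lia.
congr (_ * a _); lia.
Qed.

Section Sig.
Variable q : C.
Hypothesis q0 : q != 0.

Lemma sigma_vb a N : vb a N -> vb (sigma q a) N.
Proof. by move=> va k kl; rewrite /sigma va ?mulr0. Qed.

Lemma laurent_sigma a : laurent a -> laurent (sigma q a).
Proof. by move=> [N va]; exists N; apply: sigma_vb. Qed.

Lemma sigma_add a b : sigma q (sadd a b) = sadd (sigma q a) (sigma q b).
Proof. by apply/funext => k; rewrite /sigma /sadd mulrDr. Qed.

Lemma sigma_opp a : sigma q (sopp a) = sopp (sigma q a).
Proof. by apply/funext => k; rewrite /sigma /sopp mulrN. Qed.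

Lemma sigma_one : sigma q sone = sone.
Proof.
apply/funext => k; rewrite /sigma /sone /sconst; case: eqP => [->|_].
  by rewrite expr0z mulr1.
by rewrite mulr0.
Qed.

Lemma sigma_mul a b : laurent a -> laurent b ->
  sigma q (smul a b) = smul (sigma q a) (sigma q b).
Proof.
move=> [N va] [M vb'].
rewrite (smulV va vb') (smulV (sigma_vb va) (sigma_vb vb')); apply/funext => k.
rewrite /sigma /S; case: ifP => H; last by rewrite mulr0.
rewrite /pconv mulr_sumr; apply: eq_bigr => j _; rewrite /sh.
have jm := ltn_ord j; rewrite ltnS in jm.
rewrite mulrACA -expfzDr //; congr (q ^ _ * _); lia.
Qed.
End Sig.

Section PInv.
Variable p : nat -> C.
Fixpoint rinv (m : nat) : nat -> C :=
  match m with
  | 0 => fun i => (p 0)^-1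
  | m'.+1 => fun i => if i == m'.+1 then
       - (p 0)^-1 * \sum_(j < m'.+1) p j.+1 * rinv m' (m' - j)%N
     else rinv m' i
  end.
Definition rr i := rinv i i.

Lemma rinv_stable m i : (i <= m)%N -> rinv m i = rr i.
Proof.
rewrite /rr; elim: m => [|m IH] im.
  by move: im; rewrite leqn0 => /eqP ->.
rewrite /=; case: eqP => [->|ne]; first by rewrite /= eqxx.
apply: IH; lia.
Qed.

Hypothesis p0 : p 0 != 0.

Lemma rr_inv m : pconv rr p m = (m == 0)%:R.
Proof.
rewrite pconvC; case: m => [|m].
  by rewrite /pconv big_ord1 subnn /rr /= mulfV.
rewrite /pconv big_ord_recl subn0 /= /rr /= eqxx.
rewrite mulrA mulrN mulfV // mulN1r.
apply/eqP; rewrite addrC subr_eq0; apply/eqP; apply: eq_bigr => j _.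
by rewrite (_ : bump 0 j = j.+1) // subSS [in RHS]rinv_stable ?leq_subr.
Qed.
End PInv.

Lemma inv_exists b : laurent b -> b <> szero -> exists c, laurent c /\ smul c b = sone.
Proof.
move=> [N vbN] bnz.
have [k bk] : exists k, b k != 0.
  apply: NNPP => H; apply: bnz; apply/funext => k; rewrite /szero.
  case: (b k =P 0) => // bk; exfalso; apply: H; exists k; exact/eqP.
have kN : N <= k by case: (lerP N k) => // kl; move: bk; rewrite vbN ?eqxx.
have exP : exists i : nat, b (N + i%:Z) != 0.
  by exists (absz (k - N)%R); have -> : N + (absz (k - N)%R)%:Z = k by lia.
case: (ex_minnP exP) => i0 Pi0 mini0.
set v := N + i0%:Z.
have vbv : vb b v.
  move=> k' kl; case: (lerP N k') => kN'; last exact: vbN.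
  apply/eqP; apply: contraT => bk'.
  have : (i0 <= absz (k' - N)%R)%N by apply: mini0; have -> : N + (absz (k' - N)%R)%:Z = k' by lia.
  lia.
set c : series := fun k => if - v <= k then rr (sh b v) (absz (k + v)%R) else 0.
have vc : vb c (- v) by move=> k' kl; rewrite /c; case: ifP => //; lia.
have shc : sh c (- v) = rr (sh b v).
  apply/funext => i; rewrite /sh /c.
  have -> : - v <= - v + i%:Z by lia.
  congr rr; lia.
exists c; split; first by exists (- v).
rewrite (smulV vc vbv); apply/funext => k'; rewrite /S shc.
have p0 : sh b v 0 != 0 by rewrite /sh addr0.
rewrite addNr; case: ifP => H.
  rewrite rr_inv // /sone /sconst; have -> : k' - - v - v = k' by ring.
  have -> : (absz k' == 0)%N = (k' == 0) by apply/idP/idP => /eqP e; apply/eqP; lia.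
  by case: (k' == 0).
by rewrite /sone /sconst; case: eqP => // e; move: H; rewrite e lexx.
Qed.

Lemma sinv_spec b : laurent b -> b <> szero ->
  laurent (sinv b) /\ smul (sinv b) b = sone.
Proof. move=> lb bz; exact: (epsilon_spec (inhabits szero) (fun c => laurent c /\ smul c b = sone) (inv_exists lb bz)). Qed.

Section H.
Variable R : comNzRingType.

Fixpoint H (S : seq R) : nat -> R :=
  match S with
  | [::] => fun m => (m == 0)%:R
  | x :: S' => fix Hx m := match m with 0 => 1 | m'.+1 => H S' m'.+1 + x * Hx m' end
  end.

Lemma H_cons0 x S : H (x :: S) 0 = 1. Proof. by []. Qed.
Lemma H_consS x S m : H (x :: S) m.+1 = H S m.+1 + x * H (x :: S) m. Proof. by []. Qed.

Lemma H_ext x S S' : (forall m, H S m = H S' m) -> forall m, H (x :: S) m = H (x :: S') m.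
Proof. move=> e; elim=> [//|m IH]; by rewrite !H_consS IH e. Qed.

Lemma H_swap x y S m : H (x :: y :: S) m = H (y :: x :: S) m.
Proof.
have: H (x :: y :: S) m = H (y :: x :: S) m /\ H (x :: y :: S) m.+1 = H (y :: x :: S) m.+1.
  elim: m => [|m [IH1 IH2]].
    split=> //; rewrite !H_consS !H_cons0; ring.
  split=> //.
  rewrite [LHS]H_consS [RHS]H_consS [H (y :: S) m.+2]H_consS [H (x :: S) m.+2]H_consS.
  rewrite -IH2.
  have e1 : H (x :: y :: S) m.+1 - H (y :: S) m.+1 = x * H (x :: y :: S) m by rewrite H_consS; ring.
  have e2 : H (y :: x :: S) m.+1 - H (x :: S) m.+1 = y * H (y :: x :: S) m by rewrite H_consS; ring.
  rewrite -IH2 -IH1 in e2.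
  have -> : H (y :: S) m.+1 = H (x :: y :: S) m.+1 - x * H (x :: y :: S) m by rewrite -e1; ring.
  have -> : H (x :: S) m.+1 = H (x :: y :: S) m.+1 - y * H (x :: y :: S) m by rewrite -e2; ring.
  ring.
by case.
Qed.

Lemma H_rcons U e m : H (rcons U e) m = H (e :: U) m.
Proof.
elim: U m => [//|u U IH] m /=.
transitivity (H (u :: e :: U) m); first exact: H_ext.
exact: H_swap.
Qed.

Lemma H_dd x y S m : H (x :: S) m.+1 - H (y :: S) m.+1 = (x - y) * H (x :: y :: S) m.
Proof.
elim: m => [|m IH].
  rewrite !H_consS !H_cons0; ring.
rewrite [H (x :: y :: S) m.+1]H_consS mulrDr.
rewrite (mulrCA (x - y) x) -IH.
rewrite [H (x :: S) m.+2]H_consS [H (y :: S) m.+2]H_consS.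
rewrite [H (y :: S) m.+1]H_consS.
ring.
Qed.

Lemma H_one x m : H [:: x] m = x ^+ m.
Proof. elim: m => [|m IH]; first by []. by rewrite H_consS IH exprS /= add0r. Qed.

Lemma H_hom (c : R) (phi : R -> R) :
  (forall x y, phi (x + y) = phi x + phi y) ->
  (forall x y, phi (x * y) = phi x * phi y) ->
  phi 1 = 1 -> phi 0 = 0 ->
  forall V m, c ^+ m * phi (H V m) = H (map (fun v => c * phi v) V) m.
Proof.
move=> pD pM p1 p0; elim=> [|x V IH] m.
  by case: m => [|m] /=; rewrite ?p1 ?p0 ?mulr1 ?mulr0.
elim: m => [|m IHm]; first by rewrite /= expr0 p1 mulr1.
change (map _ (x :: V)) with ((c * phi x) :: map (fun v => c * phi v) V).
rewrite !H_consS pD pM -IH -IHm !exprS; ring.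
Qed.
End H.

Section Main.
Variable R : comNzRingType.
Variable s : R -> R.
Hypothesis sD : forall x y, s (x + y) = s x + s y.
Hypothesis sM : forall x y, s (x * y) = s x * s y.
Hypothesis s1 : s 1 = 1.
Variables (alpha beta f : R) (inv : nat -> R) (n : nat).

Lemma s0 : s 0 = 0.
Proof.
have h := sD 0 0; rewrite addr0 in h.
transitivity (s 0 + s 0 - s 0); first by rewrite addrK.
by rewrite -h subrr.
Qed.
Lemma sN x : s (- x) = - s x.
Proof. by apply/eqP; rewrite -subr_eq0 opprK -sD addNr s0. Qed.
Lemma ssign e : s ((-1) ^+ e) = (-1) ^+ e.
Proof. elim: e => [|e IH]; first by rewrite !expr0 s1. by rewrite !exprS sM IH sN s1. Qed.

Definition T x := alpha * s x.
Lemma TD x y : T (x + y) = T x + T y. Proof. by rewrite /T sD mulrDr. Qed.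
Lemma TN x : T (- x) = - T x. Proof. by rewrite /T sN mulrN. Qed.
Lemma Tsign e x : T ((-1) ^+ e * x) = (-1) ^+ e * T x.
Proof. by rewrite /T sM ssign mulrCA. Qed.

Definition g k := iter k T f.
Definition bet j := \sum_(k < j) iter k (fun h => - T h) beta.
Hypothesis hbeta : T f + f = beta.

Lemma iterN k x : iter k (fun h => - T h) x = (-1) ^+ k * iter k T x.
Proof. elim: k => [|k IH]; first by rewrite mul1r. by rewrite !iterS IH Tsign exprS; ring. Qed.

Lemma iterTD k x y : iter k T (x + y) = iter k T x + iter k T y.
Proof. elim: k => [//|k IH]; by rewrite !iterS IH TD. Qed.

Lemma betE j : bet j = f - (-1) ^+ j * g j.
Proof.
elim: j => [|j IH]; first by rewrite /bet big_ord0 /g /= mul1r subrr.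
rewrite /bet big_ord_recr /= -/(bet j) IH iterN -hbeta iterTD -iterSr.
rewrite /g iterS exprS; ring.
Qed.

Fixpoint V k : seq R := if k is k'.+1 then g k :: map -%R (V k') else [:: f].

Lemma V_inv k : exists U, map T (V k) = g k.+1 :: U /\ map -%R (V k) = rcons U ((-1) ^+ k.+1 * f).
Proof.
elim: k => [|k [U [e1 e2]]].
  by exists [::]; rewrite /= expr1 mulN1r.
exists (rcons (map T U) (T ((-1) ^+ k.+1 * f))); split.
  by rewrite [V _]/= map_cons e2 map_rcons.
have h : map -%R (map T (V k)) = map T (map -%R (V k)).
  by rewrite -!map_comp; apply: eq_map => x /=; rewrite TN.
have e3 : - g k.+1 :: map -%R U = rcons (map T U) (T ((-1) ^+ k.+1 * f)).
  transitivity (map -%R (map T (V k))); first by rewrite e1.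
  by rewrite h e2 map_rcons.
rewrite [V _]/= map_cons e2 map_rcons -rcons_cons e3; congr rcons; rewrite [in RHS]exprS; ring.
Qed.

Lemma sgn2 k : (-1) ^+ k * (-1) ^+ k = 1 :> R.
Proof. by rewrite -exprD addnn -mul2n exprM expr2 mulN1r opprK expr1n. Qed.

Definition F i acc := inv (n + 1 - i) * (alpha ^+ i * s acc - (-1) ^+ i * acc).
Definition Lop' h := foldr F h (iota 1 n).
Hypothesis hinv : forall j, (0 < j <= n)%N -> inv j * bet j = 1.

Lemma step k m e : (k + m.+1 = n)%N ->
  F m.+1 ((-1) ^+ e * H (V k) m.+1) = (-1) ^+ (e + k) * H (V k.+1) m.
Proof.
move=> hk.
have hi : (n + 1 - m.+1 = k.+1)%N by lia.
rewrite /F hi sM ssign.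
have -> : alpha ^+ m.+1 * ((-1) ^+ e * s (H (V k) m.+1)) - (-1) ^+ m.+1 * ((-1) ^+ e * H (V k) m.+1)
  = (-1) ^+ e * (alpha ^+ m.+1 * s (H (V k) m.+1) - (-1) ^+ m.+1 * H (V k) m.+1) by ring.
rewrite (@H_hom _ alpha s sD sM s1 s0).
rewrite (@H_hom _ (-1) id (fun _ _ => erefl) (fun _ _ => erefl) erefl erefl).
have -> : map (fun v => -1 * id v) (V k) = map -%R (V k) by apply: eq_map => x; rewrite /= mulN1r.
case: (V_inv k) => U [e1 e2].
rewrite -/T e1 e2 H_rcons H_dd.
have -> : H (V k.+1) m = H [:: g k.+1, (-1) ^+ k.+1 * f & U] m.
  by rewrite [V _]/= e2; apply: H_ext => j; rewrite H_rcons.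
have -> : g k.+1 - (-1) ^+ k.+1 * f = (-1) ^+ k * bet k.+1.
  rewrite betE !exprS !mulN1r !mulNr !opprK mulrDr mulrA sgn2 mul1r; ring.
transitivity ((-1) ^+ (e + k) * (inv k.+1 * bet k.+1) * H [:: g k.+1, (-1) ^+ k.+1 * f & U] m).
  rewrite exprD; ring.
by rewrite hinv ?mulr1 //; lia.
Qed.

Lemma foldL m : forall k e, (k + m = n)%N ->
  foldr F ((-1) ^+ e * H (V k) m) (iota 1 m) = (-1) ^+ (e + \sum_(k <= t < n) t).
Proof.
elim: m => [|m IH] k e hk.
  have -> : H (V k) 0 = 1 by case: k {hk}.
  rewrite big_geq ?addn0 ?mulr1 //; lia.
rewrite -addn1 iotaD foldr_cat /= add1n addn1 step; last by lia.
rewrite IH; last by lia.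
rewrite (@big_ltn _ _ _ k n); last by lia.
by rewrite addnA.
Qed.

Theorem main_abs : Lop' (f ^+ n) = (-1) ^+ ((n * n.-1) %/ 2).
Proof.
have := @foldL n 0 0 erefl; rewrite expr0 mul1r add0n (_ : H (V 0) n = f ^+ n); last exact: H_one.
rewrite /Lop' => ->.
by rewrite bin2_sum bin2 divn2.
Qed.
End Main.

Lemma lsv_exp (x : ls) i : lsv (x ^+ i) = sexp (lsv x) i.
Proof. elim: i => [//|i IH]; by rewrite exprS lsv_mul IH. Qed.

Lemma lsv_sign i : lsv ((-1) ^+ i : ls) = sconst ((-1) ^+ i).
Proof.
elim: i => [|i IH]; first by [].
rewrite exprS lsv_mul IH lsv_opp lsv_one.
have -> : sopp sone = sconst (-1) by apply/funext => k; rewrite /sopp /sone /sconst; case: ifP; rewrite ?oppr0.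
rewrite smulc; last exact: laurent_sconst.
apply/funext => k; rewrite /sscale /sconst.
by case: ifP; rewrite ?mulr0 // exprS.
Qed.

Lemma lsv_sum (G : nat -> ls) j m : lsv (\sum_(k < j) G k) m = \sum_(k < j) lsv (G k) m.
Proof.
elim: j => [|j IH]; first by rewrite !big_ord0.
by rewrite !big_ord_recr /= -IH.
Qed.

Section Bridge.
Variables (q : C) (alpha beta : series) (n : nat).
Hypotheses (q0 : q != 0) (la : laurent alpha) (lb : laurent beta).

Definition sg (x : ls) : ls := lsof (sigma q (lsv x)).
Lemma lsv_sg x : lsv (sg x) = sigma q (lsv x).
Proof. by rewrite lsofK //; apply: laurent_sigma; apply: lsP. Qed.

Lemma sgD x y : sg (x + y) = sg x + sg y.
Proof. by apply: ls_inj; rewrite lsv_add !lsv_sg lsv_add sigma_add. Qed.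
Lemma sgM x y : sg (x * y) = sg x * sg y.
Proof. by apply: ls_inj; rewrite lsv_mul !lsv_sg lsv_mul sigma_mul //; apply: lsP. Qed.
Lemma sg1 : sg 1 = 1.
Proof. by apply: ls_inj; rewrite lsv_sg lsv_one sigma_one. Qed.

Definition A := lsof alpha.
Definition B := lsof beta.
Definition inv j : ls := lsof (sinv (betaj q alpha beta j)).

Lemma lsv_iterN k : lsv (iter k (fun h => - T sg A h) B) =
  iter k (fun h => sopp (smul alpha (sigma q h))) beta.
Proof.
elim: k => [|k IH]; first by rewrite /= lsofK.
by rewrite !iterS lsv_opp /T lsv_mul lsv_sg IH /A lsofK.
Qed.

Lemma lsv_bet j : lsv (bet sg A B j) = betaj q alpha beta j.
Proof.
apply/funext => m; rewrite /bet lsv_sum /betaj; apply: eq_bigr => k _.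
by rewrite lsv_iterN.
Qed.

Hypothesis hbz : forall j, (0 < j <= n)%N -> betaj q alpha beta j <> szero.

Lemma lsv_inv j : (0 < j <= n)%N -> lsv (inv j) = sinv (betaj q alpha beta j).
Proof.
move=> hj; have lbj : laurent (betaj q alpha beta j) by rewrite -lsv_bet; apply: lsP.
by rewrite /inv lsofK //; case: (sinv_spec lbj (hbz hj)).
Qed.

Lemma lsv_F i x : (0 < i <= n)%N ->
  lsv (F sg A inv n i x) = Lfactor q alpha beta n i (lsv x).
Proof.
move=> hi; rewrite /F /Lfactor lsv_mul lsv_add lsv_opp !lsv_mul lsv_exp lsv_sg lsv_sign.
rewrite smulc; last exact: lsP.
rewrite lsv_inv /A ?lsofK //; lia.
Qed.

Lemma lsv_fold (l : seq nat) h : all (fun i => 0 < i <= n)%N l ->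
  lsv (foldr (F sg A inv n) h l) = foldr (fun i acc => Lfactor q alpha beta n i acc) (lsv h) l.
Proof.
elim: l => [//|i l IH] /andP [hi hl].
change (lsv (F sg A inv n i (foldr (F sg A inv n) h l)) =
  Lfactor q alpha beta n i (foldr (fun i acc => Lfactor q alpha beta n i acc) (lsv h) l)).
by rewrite lsv_F // IH.
Qed.
End Bridge.

Unset Implicit Arguments.
Theorem theorem2 (q : C) (n : nat) (alpha beta f : series) :
  q != 0 -> (0 < n)%N ->
  laurent alpha -> laurent beta -> laurent f ->
  alpha <> szero -> beta <> szero ->
  sadd (smul alpha (sigma q f)) f = beta ->
  (forall j : nat, (0 < j <= n)%N -> betaj q alpha beta j <> szero) ->
  Lop q alpha beta n (sexp f n) = sconst ((-1) ^+ ((n * n.-1) %/ 2)).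
Proof.
move=> q0 n0 la lb lf az bz hb hbz.
have hall : all (fun i => 0 < i <= n)%N (iota 1 n).
  apply/allP => i; rewrite mem_iota => /andP [h1 h2]; apply/andP; split => //; lia.
have -> : sexp f n = lsv ((lsof f) ^+ n) by rewrite lsv_exp lsofK.
rewrite /Lop -(@lsv_fold q alpha beta n) //.
rewrite -lsv_sign; congr lsv.
apply: (main_abs (beta := lsof beta) (sgD q) (sgM q0) (sg1 q)).
  by apply: ls_inj; rewrite lsv_add /T lsv_mul lsv_sg /A !lsofK.
move=> j hj; apply: ls_inj; rewrite lsv_mul (@lsv_inv q alpha beta n) // (lsv_bet q la lb) lsv_one.
have lbj : laurent (betaj q alpha beta j) by rewrite -(lsv_bet q la lb); apply: lsP.
by case: (sinv_spec lbj (hbz j hj)).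
Qed.
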